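(* Let $\mathcal V\cong\mathbb R^d$ be a finite-dimensional real normed space, $\mathcal X\subseteq\mathcal V$ convex, and $f:\mathcal V\to\mathbb R\cup\{+\infty\}$ proper, lower semicontinuous and convex with $\operatorname{dom} f=\mathcal X$ and nonempty solution set. Let $h$ be a $K$-strongly convex Bregman function on $\mathcal X$, suppose $f$ is relatively continuous with constant $G$, and let $(x_t)$, $(\delta_t)$ be generated by AdaMir run with a stochastic first-order oracle with noise bound $\sigma$. Then, almost surely, $$\delta_t^2\le\Big[\sqrt2\,G+\sqrt{2/K}\,\sigma\Big]^2\quad\text{for all }t\ge1.$$
   Context: $\mathcal V^*$ denotes the dual space with pairing $\langle\cdot,\cdot\rangle$ and dual norm $\|y\|_*=\max_{\|x\|\le1}\langle y,x\rangle$. For $x\in\operatorname{dom}\partial f$, $\nabla f(x)$ denotes a fixed selection of $\partial f(x)$. A Bregman function on $\mathcal X$ is a convex lower semicontinuous $h:\mathcal V\to\mathbb R\cup\{+\infty\}$ with $\operatorname{dom}\partial h\subseteq\mathcal X\subseteq\operatorname{dom}h$, whose subdifferential admits a continuous selection $\nabla h(x)\in\partial h(x)$ on $\operatorname{dom}\partial h$, and which is $K$-strongly convex ($K>0$): $h(x')\ge h(x)+\langle\nabla h(x),x'-x\rangle+\frac K2\|x'-x\|^2$ for all $x,x'\in\operatorname{dom}\partial h$. Bregman divergence: $D(p,x)=h(p)-h(x)-\langle\nabla h(x),p-x\rangle$; prox-mapping: $P_x(y)=\arg\min_{x'\in\mathcal X}\{\langle y,x-x'\rangle+D(x',x)\}$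 for $x\in\operatorname{dom}\partial h$, $y\in\mathcal V^*$. Stochastic AdaMir: pick $x_0\neq x_1$ in $\operatorname{dom}\partial h$, $\delta_0=[D(x_0,x_1)+D(x_1,x_0)]^{1/2}$. For $t=1,2,\dots$: $\gamma_t=\big(\sum_{s=0}^{t-1}\delta_s^2\big)^{-1/2}$; the oracle returns $g_t=\nabla f(x_t)+U_t$ with $\mathbb E[U_t\mid\mathcal F_t]=0$ ($\mathcal F_t$ the natural filtration of $(x_t)$) and $\|U_t\|_*^2\le\sigma^2$ almost surely; then $x_{t+1}=P_{x_t}(-\gamma_tg_t)$ and $\delta_t=[D(x_t,x_{t+1})+D(x_{t+1},x_t)]^{1/2}/\gamma_t$. $f$ is relatively continuous with constant $G>0$ if $f(x)-f(x')\le\langle\nabla f(x),x-x'\rangle\le G\sqrt{2D(x',x)}$ for all $x\in\operatorname{dom}\partial h$, $x'\in\operatorname{dom}h$. *)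

(* Defs.v *)
From HB Require Import structures.
From mathcomp Require Import all_boot all_order all_algebra.
From mathcomp Require Import all_classical all_reals all_analysis.
Set Implicit Arguments. Unset Strict Implicit. Unset Printing Implicit Defensive.
Import Order.TTheory GRing.Theory Num.Theory numFieldNormedType.Exports.
Local Open Scope classical_set_scope.
Local Open Scope ring_scope.

Section AdaMirDefs.
Context {R : realType} {d : nat}.
Local Notation V := 'rV[R]_d.

(* duality pairing <y, x> between V* (identified with 'rV_d) and V *)
Definition pair (y x : V) : R := \sum_(i < d) y ord0 i * x ord0 i.

Definition is_norm (N : V -> R) : Prop :=
  [/\ forall x, 0 <= N x, forall x, N x = 0 -> x = 0,
      forall (a : R) x, N (a *: x) = `|a| * N x
    & forall x y, N (x + y) <= N x + N y].

Definition dual_norm (N : V -> R) (y : V) : R :=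
  sup [set pair y x | x in [set x | N x <= 1]].

Definition edom (f : V -> \bar R) : set V := [set x | (f x < +oo)%E].

Definition proper_fun (f : V -> \bar R) : Prop :=
  (forall x, f x <> -oo%E) /\ (exists x, f x \is a fin_num).

Definition cvx_set (X : set V) : Prop :=
  forall (x y : V) (l : R), X x -> X y -> 0 <= l <= 1 -> X (l *: x + (1 - l) *: y).

Definition cvx_efun (f : V -> \bar R) : Prop :=
  forall (x y : V) (l : R), 0 <= l <= 1 ->
    (f (l *: x + (1 - l) *: y)%R <= l%:E * f x + (1 - l)%R%:E * f y)%E.

Definition subdiff (f : V -> \bar R) (x : V) : set V :=
  [set y | f x \is a fin_num /\
           forall x', (f x + (pair y (x' - x)%R)%:E <= f x')%E].

Definition dom_subdiff (f : V -> \bar R) : set V :=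
  [set x | exists y, subdiff f x y].

(* Bregman divergence D(p, x) (used for p, x in dom h) *)
Definition breg (h : V -> \bar R) (nh : V -> V) (p x : V) : R :=
  fine (h p) - fine (h x) - pair (nh x) (p - x).

Definition bregman_fun (N : V -> R) (X : set V) (h : V -> \bar R) (nh : V -> V)
    (K : R) : Prop :=
  [/\ cvx_efun h /\ lower_semicontinuous h /\ (forall x, h x <> -oo%E),
      dom_subdiff h `<=` X /\ X `<=` edom h,
      (forall x, dom_subdiff h x -> subdiff h x (nh x)) /\
        {within dom_subdiff h, continuous nh},
      0 < K
    & forall x x', dom_subdiff h x -> dom_subdiff h x' ->
        (h x + (pair (nh x) (x' - x)%R)%:E + (K / 2 * N (x' - x)%R ^+ 2)%R%:E
           <= h x')%E].

Definition is_prox (X : set V) (h : V -> \bar R) (nh : V -> V) (x y z : V) : Prop :=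
  X z /\ forall z', X z' ->
    pair y (x - z) + breg h nh z x <= pair y (x - z') + breg h nh z' x.

Definition rel_continuous (f : V -> \bar R) (nf : V -> V) (h : V -> \bar R)
    (nh : V -> V) (G : R) : Prop :=
  0 < G /\ forall x x', dom_subdiff h x -> edom h x' ->
    (f x - f x' <= (pair (nf x) (x - x')%R)%:E)%E /\
    pair (nf x) (x - x') <= G * Num.sqrt (2 * breg h nh x' x).

Definition gamma {T : Type} (delta : nat -> T -> R) (t : nat) (w : T) : R :=
  (Num.sqrt (\sum_(s < t) delta s w ^+ 2))^-1.

Definition nat_filtration {T : Type} (x : nat -> T -> V) (t : nat) : set (set T) :=
  <<s [set A | exists s (i : 'I_d) (B : set R),
          [/\ (s <= t)%N, measurable B & A = (fun w => x s w ord0 i) @^-1` B]] >>.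

End AdaMirDefs.

(* Main.v *)
Require Import Defs.
From HB Require Import structures.
From mathcomp Require Import all_boot all_order all_algebra.
From mathcomp Require Import all_classical all_reals all_analysis.
From mathcomp Require Import ring lra.
From mathcomp Require finmap.
Import Order.TTheory GRing.Theory Num.Theory numFieldNormedType.Exports.
Local Open Scope classical_set_scope.
Local Open Scope ring_scope.

Section PairLemmas.
Context {R : realType} {d : nat}.
Local Notation V := 'rV[R]_d.
Implicit Types (a b c u v : V).

Lemma pairDl a b c : pair (a + b) c = pair a c + pair b c.
Proof. by rewrite /pair -big_split; apply: eq_bigr => i _; rewrite mxE mulrDl. Qed.
Lemma pairDr a b c : pair c (a + b) = pair c a + pair c b.
Proof. by rewrite /pair -big_split; apply: eq_bigr => i _; rewrite mxE mulrDr. Qed.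
Lemma pairZl (k : R) a b : pair (k *: a) b = k * pair a b.
Proof. by rewrite /pair mulr_sumr; apply: eq_bigr => i _; rewrite mxE mulrA. Qed.
Lemma pairZr (k : R) a b : pair a (k *: b) = k * pair a b.
Proof. by rewrite /pair mulr_sumr; apply: eq_bigr => i _; rewrite mxE mulrCA. Qed.
Lemma pairC a b : pair a b = pair b a.
Proof. by rewrite /pair; apply: eq_bigr => i _; rewrite mulrC. Qed.
Lemma pairNl a b : pair (- a) b = - pair a b.
Proof. by rewrite -scaleN1r pairZl mulN1r. Qed.
Lemma pairNr a b : pair a (- b) = - pair a b.
Proof. by rewrite -scaleN1r pairZr mulN1r. Qed.
Lemma pairBl a b c : pair (a - b) c = pair a c - pair b c.
Proof. by rewrite pairDl pairNl. Qed.
Lemma pairBr a b c : pair c (a - b) = pair c a - pair c b.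
Proof. by rewrite pairDr pairNr. Qed.
Lemma pair0l a : pair 0 a = 0.
Proof. by rewrite -(scale0r 0) pairZl mul0r. Qed.
Lemma pair0r a : pair a 0 = 0.
Proof. by rewrite -(scale0r 0) pairZr mul0r. Qed.
Lemma pair_ge0 a : 0 <= pair a a.
Proof. by rewrite /pair; apply: sumr_ge0 => i _; rewrite -expr2 sqr_ge0. Qed.

Lemma coord_le a (i : 'I_d) : `|a ord0 i| <= `|a|.
Proof.
by rewrite [leRHS]/Num.norm /= mx_normrE; apply/bigmax_geP; right => /=; exists (ord0, i).
Qed.

Lemma pair_abs_le a b : `|pair a b| <= d%:R * (`|a| * `|b|).
Proof.
rewrite /pair (le_trans (ler_norm_sum _ _ _))//.
have -> : d%:R * (`|a| * `|b|) = \sum_(i < d) (`|a| * `|b|).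
  by rewrite sumr_const card_ord mulr_natl.
apply: ler_sum => i _; rewrite normrM.
by apply: ler_pM => //; apply: coord_le.
Qed.

Lemma pair_le a b : pair a b <= d%:R * (`|a| * `|b|).
Proof. exact: le_trans (ler_norm _) (pair_abs_le a b). Qed.

Lemma coord_sq_le a (i : 'I_d) : a ord0 i ^+ 2 <= pair a a.
Proof.
rewrite /pair (bigD1 i)//= -expr2 lerDl.
by apply: sumr_ge0 => j _; rewrite -expr2 sqr_ge0.
Qed.

Lemma norm_le_sqrt a : `|a| <= Num.sqrt (pair a a).
Proof.
rewrite [leLHS]/Num.norm /= mx_normrE; apply: bigmax_le => //=.
move=> [i j] _ /=; rewrite (ord1 i).
rewrite -(sqrtr_sqr (a ord0 j)); apply: ler_wsqrtr.
exact: coord_sq_le.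
Qed.

Lemma norm_sq_le a : `|a| ^+ 2 <= pair a a.
Proof.
have h := norm_le_sqrt a.
rewrite -(sqr_sqrtr (pair_ge0 a)).
by apply: lerXn2r => //; rewrite nnegrE // sqrtr_ge0.
Qed.

End PairLemmas.

Section NormLemmas.
Context {R : realType} {d : nat}.
Local Notation V := 'rV[R]_d.
Variable N : V -> R.
Hypothesis HN : is_norm N.

Lemma N0 : N 0 = 0.
Proof. case: HN => _ _ Z _; by rewrite -(scale0r 0) Z normr0 mul0r. Qed.
Lemma Nge0 x : 0 <= N x.
Proof. by case: HN => + _ _ _; apply. Qed.
Lemma NN x : N (- x) = N x.
Proof. case: HN => _ _ Z _; by rewrite -scaleN1r Z normrN normr1 mul1r. Qed.
Lemma NZ (a : R) x : N (a *: x) = `|a| * N x.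
Proof. by case: HN => _ _ + _; apply. Qed.
Lemma NT x y : N (x + y) <= N x + N y.
Proof. by case: HN => _ _ _; apply. Qed.
Lemma Neq0 x : N x = 0 -> x = 0.
Proof. by case: HN => _ + _ _; apply. Qed.

Definition Nconst : R := \sum_(j < d) N 'e_j.

Lemma Nconst_ge0 : 0 <= Nconst.
Proof. by apply: sumr_ge0 => j _; apply: Nge0. Qed.

Lemma N_upper x : N x <= Nconst * `|x|.
Proof.
rewrite {1}(row_sum_delta x) /Nconst mulr_suml.
elim/big_ind2 : _ => //.
- by rewrite N0.
- move=> a b c e h1 h2; exact: le_trans (NT _ _) (lerD h1 h2).
- move=> j _; rewrite NZ mulrC; apply: ler_wpM2l; first exact: Nge0.
  exact: coord_le.
Qed.

Lemma N_lip x y : `|N x - N y| <= Nconst * `|x - y|.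
Proof.
have h1 : N x - N y <= Nconst * `|x - y|.
  have := NT (x - y) y; rewrite subrK => h.
  have := N_upper (x - y); lra.
have h2 : N y - N x <= Nconst * `|x - y|.
  have := NT (y - x) x; rewrite subrK => h.
  have := N_upper (y - x); rewrite distrC; lra.
rewrite ler_norml; apply/andP; split; lra.
Qed.

Lemma N_cont : continuous N.
Proof.
move=> x; apply/(@cvgrPdist_lt R R^o _ (nbhs x) (nbhs_filter x)) => e e0. apply/(@nbhs_normP R V x).
have M0 : 0 < Nconst + 1 by rewrite ltr_wpDl // Nconst_ge0.
exists (e / (Nconst + 1)); first by rewrite /= divr_gt0.
move=> y /= hy.
apply: le_lt_trans (N_lip x y) _.
apply: (@le_lt_trans _ _ ((Nconst + 1) * `|x - y|)).
  by apply: ler_wpM2r => //; rewrite lerDl.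
by rewrite mulrC -ltr_pdivlMr.
Qed.

Lemma N_lower : exists2 c, 0 < c & forall x, c * `|x| <= N x.
Proof.
pose S := [set x : V | `|x| = 1].
have [S0|Sne] := eqVneq S set0.
  exists 1 => // x; rewrite mul1r.
  have [->|xn0] := eqVneq x 0; first by rewrite normr0 Nge0.
  have : S ((`|x|)^-1 *: x).
    rewrite /S /= normrZ normrV ?unitfE ?normr_eq0 // normr_id mulVf //.
    by rewrite normr_eq0.
  by rewrite S0.
have Sn0 : S !=set0 by apply/set0P.
have cS : compact S.
  apply: bounded_closed_compact.
    exists 1; split => //= r r1 x Sx; rewrite /S /= in Sx.
    by rewrite Sx ltW.
  have -> : S = (fun x : V => `|x|) @^-1` [set 1].
    by [].
  apply: closed_comp => //.
  by move=> x _; apply: norm_continuous.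
have [c0 c0S c0min] := compact_EVT_min Sn0 cS (continuous_subspaceT N_cont).
rewrite inE /S /= in c0S.
exists (N c0).
  rewrite lt0r Nge0 andbT; apply/eqP => /Neq0 c00.
  by move: c0S; rewrite c00 normr0 => /esym/eqP; rewrite oner_eq0.
move=> x.
have [->|xn0] := eqVneq x 0; first by rewrite normr0 mulr0 Nge0.
have nx0 : 0 < `|x| by rewrite normr_gt0.
have := c0min ((`|x|)^-1 *: x).
rewrite inE /S /= normrZ normrV ?unitfE ?normr_eq0 // normr_id mulVf ?normr_eq0 //.
move=> /(_ erefl); rewrite NZ normrV ?unitfE ?normr_eq0 // normr_id.
by rewrite ler_pdivlMl // mulrC.
Qed.

Lemma dual_has_sup y : has_sup [set pair y x | x in [set x | N x <= 1]].
Proof.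
have [c c0 hc] := N_lower.
split.
  by exists (pair y 0), 0 => //=; rewrite N0 ler01.
exists (d%:R * `|y| / c) => _ [x /= Nx1 <-].
apply: le_trans (pair_le y x) _.
rewrite -mulrA; apply: ler_wpM2l => //.
rewrite ler_pdivlMr // -mulrA -[leRHS]mulr1; apply: ler_wpM2l => //.
by rewrite mulrC; apply: le_trans (hc x) Nx1.
Qed.

Lemma dual_bound y v : pair y v <= dual_norm N y * N v.
Proof.
have [->|vn0] := eqVneq v 0; first by rewrite pair0r N0 mulr0.
have Nv0 : 0 < N v.
  rewrite lt0r Nge0 andbT; apply/eqP => /Neq0 v0; by rewrite v0 eqxx in vn0.
have hu : N ((N v)^-1 *: v) = 1.
  by rewrite NZ gtr0_norm ?invr_gt0 // mulVf // gt_eqF.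
have : pair y ((N v)^-1 *: v) <= dual_norm N y.
  apply: sup_upper_bound; first exact: dual_has_sup.
  by exists ((N v)^-1 *: v) => //=; rewrite hu.
rewrite pairZr => h.
have := ler_wpM2l (ltW Nv0) h.
by rewrite mulrA mulfV ?gt_eqF // mul1r mulrC.
Qed.

End NormLemmas.

Section Generic.
Context {R : realType}.

Lemma small_s (A C Q del : R) : 0 <= C -> 0 <= Q -> 0 < del ->
  (forall s, 0 < s -> s <= 1 -> s * Q < del -> A <= s * C) -> A <= 0.
Proof.
move=> C0 Q0 d0 H; rewrite leNgt; apply/negP => A0.
pose T := 1 + C / A + Q / del.
have CA : 0 <= C / A by rewrite divr_ge0 // ltW.
have Qd : 0 <= Q / del by rewrite divr_ge0 // ltW.
have T1 : 1 <= T by rewrite /T -addrA lerDl addr_ge0.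
have T0 : 0 < T by apply: lt_le_trans T1.
have s0 : 0 < T^-1 by rewrite invr_gt0.
have s1 : T^-1 <= 1 by rewrite invf_le1.
have sQ : T^-1 * Q < del.
  rewrite mulrC ltr_pdivrMr //.
  have -> : del * T = del + del * (C / A) + Q.
    by rewrite /T !mulrDr mulr1 [del * (Q / del)]mulrC -mulrA mulVf ?mulr1 // gt_eqF.
  have : 0 <= del * (C / A) by rewrite mulr_ge0 // ltW.
  lra.
have := H _ s0 s1 sQ.
rewrite mulrC ler_pdivlMr // => hA.
move: hA.
have -> : A * T = A + C + A * (Q / del).
  by rewrite /T !mulrDr mulr1 [A * (C / A)]mulrC -mulrA mulVf ?mulr1 // gt_eqF.
have : 0 <= A * (Q / del) by rewrite mulr_ge0 // ltW.
lra.
Qed.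

Lemma small_s1 (A C : R) : 0 <= C ->
  (forall s, 0 < s -> s <= 1 -> A <= s * C) -> A <= 0.
Proof.
move=> C0 H; apply: (@small_s A C 0 1) => // s s0 s1 _; exact: H.
Qed.

Lemma ext_add_lt (a a' : R) (e : \bar R) (s : R) :
  (a'%:E < e)%E -> a - a' < s -> (a%:E < e + s%:E)%E.
Proof.
case: e => [r| |] h1 h2.
- rewrite -EFinD lte_fin; rewrite lte_fin in h1; lra.
- by rewrite addye // ltey.
- by move: h1; rewrite ltNge leNye.
Qed.

Lemma lsc_add_cont (T : topologicalType) (h : T -> \bar R) (g : T -> R) :
  lower_semicontinuous h -> (forall x, (h x <> -oo)%E) -> continuous g ->
  lower_semicontinuous (fun x => h x + (g x)%:E)%E.
Proof.
move=> hl hn gc x a ha.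
have [a' [h1 h2]] : exists a', (a'%:E < h x)%E /\ a - a' < g x.
  move: (hn x); case: (h x) ha => [r| |] ha hnx.
  - exists (r - (r + g x - a) / 2); split.
      rewrite lte_fin; rewrite -EFinD lte_fin in ha; lra.
    rewrite -EFinD lte_fin in ha; lra.
  - exists (a - g x + 1)%R; split; first by rewrite ltey.
    lra.
  - by [].
have [V1 V1n V1h] := hl x a' h1.
pose e := g x - (a - a').
have e0 : 0 < e by rewrite /e subr_gt0.
have := gc x; move/cvgrPdist_lt => /(_ e e0) V2n.
exists (V1 `&` [set y | `|g x - g y| < e]); first exact: filterI.
move=> y [/V1h hy1 hy2].
apply: ext_add_lt hy1 _.
move: hy2; rewrite /e => /= hy2; have := ler_norm (g x - g y); lra.
Qed.

Lemma lsc_compact_min (T : ptopologicalType) (phi : T -> \bar R) (S : set T) (b : T) (m0 : R) :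
  lower_semicontinuous phi -> compact S -> S b ->
  (forall p, S p -> phi p \is a fin_num) ->
  (forall p, S p -> (m0%:E <= phi p)%E) ->
  exists2 p, S p & forall p', S p' -> (phi p <= phi p')%E.
Proof.
move=> pl cS Sb pfin plb.
pose E := [set fine (phi p) | p in S].
have Elb : has_lbound E.
  exists m0 => _ [p Sp <-]; rewrite -lee_fin (fineK (pfin p Sp)); exact: plb.
have Ene : E !=set0 by exists (fine (phi b)), b.
have Einf : has_inf E by split.
pose m := inf E.
have mle p : S p -> (m%:E <= phi p)%E.
  by move=> Sp; rewrite -(fineK (pfin p Sp)) lee_fin; apply: ge_inf => //; exists p.
have [[p Sp pm]|nomin] := pselect (exists2 p, S p & fine (phi p) <= m).
  exists p => // p' Sp'; apply: le_trans (mle p' Sp').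
  by rewrite -(fineK (pfin p Sp)) lee_fin.
exfalso.
have gt p : S p -> m < fine (phi p).
  move=> Sp; rewrite ltNge; apply/negP => h; apply: nomin; by exists p.
have cov : S `<=` cover [set e : R | 0 < e] (fun e => [set p | ((m + e)%:E < phi p)%E]).
  move=> p Sp; exists ((fine (phi p) - m) / 2) => /=.
    by rewrite divr_gt0 // subr_gt0 gt.
  rewrite -(fineK (pfin p Sp)) lte_fin; have := gt p Sp; lra.
have op : forall e, [set e : R | 0 < e] e -> open [set p | ((m + e)%:E < phi p)%E].
  by move=> e _; move/lower_semicontinuousP : pl; apply.
have cS' : cover_compact S by rewrite -compact_cover.
have [D' D'sub D'cov] := cS' R _ _ op cov.
pose es := \big[Num.min/1]_(e <- finmap.enum_fset D') e.
have es0 : 0 < es.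
  rewrite /es big_seq; elim/big_ind : _ => //.
  - by move=> u v u0 v0; rewrite lt_min u0 v0.
  - by move=> e /D'sub /set_mem.
have esle e : e \in finmap.enum_fset D' -> es <= e.
  rewrite /es; elim: (finmap.enum_fset D') => // a r IH.
  rewrite inE big_cons => /orP[/eqP ->|/IH h]; first by rewrite ge_min lexx.
  by rewrite ge_min h orbT.
have [_ [p Sp <-] hp] := inf_adherent es0 Einf.
have [e eD' /= he] := D'cov p Sp.
have := esle e eD'.
move: he; rewrite -(fineK (pfin p Sp)) lte_fin.
rewrite -/m in hp; lra.
Qed.

End Generic.

Section Quad.
Context {R : realType} {d : nat}.
Local Notation V := 'rV[R]_d.

Lemma qD (a b : V) : pair (a + b) (a + b) = pair a a + 2 * pair a b + pair b b.
Proof. rewrite !pairDl !pairDr (pairC b a); ring. Qed.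

Lemma qZ (t : R) (a : V) : pair (t *: a) (t *: a) = t ^+ 2 * pair a a.
Proof. rewrite pairZl pairZr; ring. Qed.

Definition gq (u a : V) (c : R) (p : V) : R := - pair u p + c * pair (p - a) (p - a).

Lemma gq_diff (u a : V) (c : R) (x v : V) :
  gq u a c (x + v) = gq u a c x - pair u v + c * (2 * pair (x - a) v + pair v v).
Proof.
rewrite /gq (_ : x + v - a = (x - a) + v); last by rewrite addrAC.
rewrite qD pairDr; ring.
Qed.

Lemma gq_cont (u a : V) (c : R) : continuous (gq u a c).
Proof.
move=> x; apply/(@cvgrPdist_lt R R^o _ (nbhs x) (nbhs_filter x)) => e e0.
apply/(@nbhs_normP R V x).
pose A := d%:R * `|u| + 2 * `|c| * d%:R * `|x - a| + `|c| * d%:R.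
have A0 : 0 <= A.
  by rewrite /A !addr_ge0 // ?mulr_ge0.
exists (Num.min 1 (e / (A + 1))).
  by rewrite /= lt_min ltr01 divr_gt0 // ltr_wpDl.
move=> y /=; rewrite lt_min => /andP[y1 ye].
have -> : y = x + (y - x) by rewrite addrC subrK.
rewrite gq_diff.
set v := y - x.
have nv : `|v| = `|x - y| by rewrite distrC.
rewrite -nv in y1 ye.
have h1 := pair_abs_le u v.
have h2 := pair_abs_le (x - a) v.
have h3 := pair_abs_le v v.
have nv0 : 0 <= `|v| by [].
have : `|v| * `|v| <= `|v| by rewrite -[leRHS]mulr1 ler_wpM2l // ltW.
move=> hvv.
have hA : `|gq u a c x - (gq u a c x - pair u v + c * (2 * pair (x - a) v + pair v v))|
   <= A * `|v|.
  have -> : gq u a c x - (gq u a c x - pair u v + c * (2 * pair (x - a) v + pair v v))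
     = pair u v + - (c * (2 * pair (x - a) v + pair v v)) by ring.
  apply: le_trans (ler_normD _ _) _.
  rewrite normrN normrM.
  apply: le_trans (lerD (lexx _) (ler_wpM2l (normr_ge0 c) (ler_normD _ _))) _.
  rewrite normrM ger0_norm //.
  have e1 : `|c| * (2 * `|pair (x - a) v| + `|pair v v|) <=
            `|c| * (2 * (d%:R * (`|x - a| * `|v|)) + d%:R * (`|v| * `|v|)).
    apply: ler_wpM2l => //; apply: lerD => //; apply: ler_wpM2l => //.
  apply: le_trans (lerD h1 e1) _.
  have e2 : d%:R * (`|v| * `|v|) <= d%:R * `|v| by apply: ler_wpM2l.
  rewrite /A.
  have e3 : `|c| * (2 * (d%:R * (`|x - a| * `|v|)) + d%:R * (`|v| * `|v|)) <=
            `|c| * (2 * (d%:R * (`|x - a| * `|v|)) + d%:R * `|v|).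
    by apply: ler_wpM2l => //; rewrite lerD2l.
  apply: le_trans (lerD (lexx _) e3) _.
  by rewrite !mulrDl le_eqVlt; apply/orP; left; apply/eqP; ring.
apply: le_lt_trans hA _.
apply: (@le_lt_trans _ _ ((A + 1) * `|v|)).
  by apply: ler_wpM2r => //; rewrite lerDl.
by rewrite mulrC -ltr_pdivlMr // ltr_wpDl.
Qed.

End Quad.

Section HLemmas.
Context {R : realType} {d : nat}.
Local Notation V := 'rV[R]_d.
Variables (h : V -> \bar R).
Hypothesis hcvx : cvx_efun h.
Hypothesis hlsc : lower_semicontinuous h.
Hypothesis hnm : forall x, h x <> -oo%E.

Lemma fin_of_le (x : V) (r : R) : (h x <= r%:E)%E -> h x \is a fin_num.
Proof.
move=> hr; rewrite fin_numElt; apply/andP; split.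
  by rewrite ltNge leeNy_eq; apply/eqP; apply: hnm.
by apply: le_lt_trans hr _; rewrite ltey.
Qed.

Lemma fin_of_lt (x : V) (e : \bar R) : (h x < e)%E -> e \is a fin_num -> h x \is a fin_num.
Proof.
move=> hr ef; apply: (@fin_of_le x (fine e)); rewrite fineK //; exact: ltW.
Qed.

Lemma min_subgrad (u a : V) (c : R) (p : V) : 0 <= c -> h p \is a fin_num ->
  (forall p', (h p + (gq u a c p)%:E <= h p' + (gq u a c p')%:E)%E) ->
  subdiff h p (u - (2 * c) *: (p - a)).
Proof.
move=> c0 hpf hmin; split => // x'.
have := hnm x'.
case hx' : (h x') => [H'| |] // _; last by rewrite leey.
rewrite -(fineK hpf) -EFinD lee_fin.
set Hs := fine (h p).
set v := x' - p.
set s := u - (2 * c) *: (p - a).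
suff : Hs + pair s v - H' <= 0 by lra.
apply: (@small_s1 _ _ (c * pair v v)); first by rewrite mulr_ge0 // pair_ge0.
move=> t t0 t1.
have t01 : 0 <= t <= 1 by rewrite ltW.
have hc := hcvx x' p t t01.
have ept : t *: x' + (1 - t) *: p = p + t *: v.
  by apply/rowP => i; rewrite !mxE; ring.
rewrite ept hx' -(fineK hpf) -!EFinM -EFinD in hc.
have hptf := fin_of_le _ _ hc.
rewrite -(fineK hptf) lee_fin in hc.
have hm := hmin (p + t *: v).
rewrite -(fineK hptf) -(fineK hpf) -!EFinD lee_fin in hm.
rewrite gq_diff pairZr pairZr qZ in hm.
have e3 : pair s v = pair u v - 2 * c * pair (p - a) v.
  by rewrite /s [LHS]pairBl pairZl; ring.
rewrite e3.
set Ht := fine (h (p + t *: v)) in hc hm.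
rewrite -/Hs in hc hm.
have key : t * (Hs + (pair u v - 2 * c * pair (p - a) v) - H') <= t * (t * (c * pair v v)).
  nra.
by rewrite ler_pM2l in key.
Qed.


Lemma ext_fin_add (e : \bar R) (r : R) : e \is a fin_num -> (e + r%:E)%E = (fine e + r)%:E.
Proof. by move=> ef; rewrite -{1}(fineK ef) -EFinD. Qed.

Lemma min_exists (u a : V) (c : R) (x0 s0 : V) : 0 < c -> subdiff h x0 s0 ->
  exists p, h p \is a fin_num /\
    forall p', (h p + (gq u a c p)%:E <= h p' + (gq u a c p')%:E)%E.
Proof.
move=> c0 [hx0f hs0].
pose phi := fun p => (h p + (gq u a c p)%:E)%E.
pose H0 := fine (h x0).
pose w0 := s0 - u.
pose C0 := H0 + pair s0 (a - x0) - pair u a - pair w0 w0 / (2 * c).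
have lb p : ((C0 + c / 2 * pair (p - a) (p - a))%:E <= phi p)%E.
  apply: le_trans (leeD (hs0 p) (lexx _)).
  rewrite -(fineK hx0f) -!EFinD lee_fin /gq -/H0.
  have hq := pair_ge0 (w0 + c *: (p - a)).
  rewrite qD pairZr qZ in hq.
  have e1 : pair s0 (p - x0) - pair u p = pair w0 (p - a) + pair s0 (a - x0) - pair u a.
    by rewrite /w0 !pairBl !pairBr; ring.
  rewrite /C0.
  have hw : - pair w0 w0 / (2 * c) - c / 2 * pair (p - a) (p - a) <= pair w0 (p - a).
    have c2 : 0 < 2 * c by rewrite mulr_gt0.
    rewrite -(ler_pM2l c2).
    have -> : 2 * c * (- pair w0 w0 / (2 * c) - c / 2 * pair (p - a) (p - a)) =
      - pair w0 w0 - c ^+ 2 * pair (p - a) (p - a).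
      field; rewrite gt_eqF //.
    nra.
  lra.
have phix0 : phi x0 \is a fin_num by rewrite /phi ext_fin_add.
pose M := fine (phi x0).
pose S := [set p | (phi p <= M%:E)%E].
have phifin p : S p -> phi p \is a fin_num.
  move=> Sp; rewrite fin_numElt; apply/andP; split.
    by apply: lt_le_trans (lb p); rewrite ltNye.
  by apply: le_lt_trans Sp _; rewrite ltey.
have Sbd p : S p -> c / 2 * pair (p - a) (p - a) <= M - C0.
  move=> Sp; have := le_trans (lb p) Sp; rewrite lee_fin; lra.
have phil : lower_semicontinuous phi.
  apply: lsc_add_cont => //; exact: gq_cont.
have cS : compact S.
  apply: bounded_closed_compact.
    pose B := `|a| + Num.sqrt (2 * (M - C0) / c).
    exists B; split; first exact: num_real.
    move=> r Br p Sp.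
    apply: le_trans (ltW Br).
    have hpa : `|p - a| <= Num.sqrt (2 * (M - C0) / c).
      apply: le_trans (norm_le_sqrt _) _; apply: ler_wsqrtr.
      rewrite ler_pdivlMr //.
      have := Sbd p Sp.
      have -> : c / 2 * pair (p - a) (p - a) = (pair (p - a) (p - a) * c) / 2 by field.
      lra.
    have -> : p = (p - a) + a by rewrite subrK.
    apply: le_trans (ler_normD _ _) _; rewrite /B; lra.
  have -> : S = ~` [set p | (M%:E < phi p)%E].
    apply/seteqP; split => p /=; rewrite /S /=.
      by move=> hp hlt; move: hp; rewrite leNgt hlt.
    by move/negP; rewrite -leNgt.
  apply: open_closedC.
  by move/lower_semicontinuousP : phil; apply.
have Sx0 : S x0 by rewrite /S /= /M fineK.
have plb p : S p -> (C0%:E <= phi p)%E.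
  move=> _; apply: le_trans (lb p); rewrite lee_fin lerDl.
  by rewrite mulr_ge0 ?divr_ge0 ?pair_ge0 // ltW.
have [p Sp pmin] := @lsc_compact_min R _ phi S x0 C0 phil cS Sx0 phifin plb.
exists p; split.
  have := phifin p Sp; rewrite /phi fin_numD => /andP[] //.
move=> p'.
have [Sp'|nSp'] := pselect (S p'); first exact: pmin.
apply: le_trans (Sp) _.
by move: nSp'; rewrite /S /= => /negP; rewrite -ltNge => /ltW.
Qed.


Lemma glob (u : V) (r : R) (x0 s0 : V) : subdiff h x0 s0 ->
  (forall p, dom_subdiff h p -> ((r + pair u p)%:E <= h p)%E) ->
  forall p, ((r + pair u p)%:E <= h p)%E.
Proof.
move=> hs0 H p; rewrite leNgt; apply/negP => hlt.
have hpf : h p \is a fin_num by apply: (fin_of_lt _ _ hlt).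
have [q [hqf hqmin]] := min_exists u p 1 x0 s0 ltr01 hs0.
have hsub := min_subgrad u p 1 q ler01 hqf hqmin.
have := H q (ex_intro _ _ hsub).
have := hqmin p.
rewrite -(fineK hpf) -(fineK hqf) -!EFinD !lee_fin.
rewrite -(fineK hpf) lte_fin in hlt.
rewrite /gq subrr pair0r mulr0 addr0 mul1r.
have := pair_ge0 (q - p).
lra.
Qed.

End HLemmas.

Section Cont.
Context {R : realType} {d : nat}.
Local Notation V := 'rV[R]_d.

Lemma cont_eps (A : set V) (f : V -> V) : {within A, continuous f} ->
  forall x, A x -> forall e, 0 < e ->
  exists2 del, 0 < del & forall y, A y -> `|x - y| < del -> `|f x - f y| < e.
Proof.
move=> fc x Ax e e0.
have := fc x.
move=> hx0.
have hx : f @ within A (nbhs x) --> f x.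
  by rewrite (nbhs_subspace_in Ax); exact: hx0.
have := @cvgr_dist_lt R V _ (within A (nbhs x)) (within_filter _ (nbhs_filter x)) f (f x) hx e e0.
rewrite /within /= => H.
have [del /= del0 hdel] := iffLR (@nbhs_normP R V x _) H.
exists del => // y Ay hy.
apply: hdel => //=.
Qed.

End Cont.

Section BregLemmas.
Context {R : realType} {d : nat}.
Local Notation V := 'rV[R]_d.
Variables (N : V -> R) (X : set V) (h : V -> \bar R) (nh : V -> V) (K : R).
Hypothesis HB : bregman_fun N X h nh K.

Lemma hcvx : cvx_efun h. Proof. by case: HB => -[+ _] _ _ _ _. Qed.
Lemma hlsc : lower_semicontinuous h. Proof. by case: HB => -[_ [+ _]] _ _ _ _. Qed.
Lemma hnm : forall x, h x <> -oo%E. Proof. by case: HB => -[_ [_ +]] _ _ _ _. Qed.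
Lemma hsubX : dom_subdiff h `<=` X. Proof. by case: HB => _ [+ _] _ _ _. Qed.
Lemma hXe : X `<=` edom h. Proof. by case: HB => _ [_ +] _ _ _. Qed.
Lemma hsel x : dom_subdiff h x -> subdiff h x (nh x). Proof. by case: HB => _ _ [+ _] _ _; apply. Qed.
Lemma hcont : {within dom_subdiff h, continuous nh}. Proof. by case: HB => _ _ [_ +] _ _. Qed.
Lemma K0 : 0 < K. Proof. by case: HB => _ _ _ + _. Qed.
Lemma hsc x x' : dom_subdiff h x -> dom_subdiff h x' ->
        (h x + (pair (nh x) (x' - x)%R)%:E + (K / 2 * N (x' - x)%R ^+ 2)%R%:E <= h x')%E.
Proof. by case: HB => _ _ _ _ +; apply. Qed.

Lemma finX x : X x -> h x \is a fin_num.
Proof.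
move=> /hXe hx; rewrite fin_numElt hx andbT.
by rewrite ltNge leeNy_eq; apply/eqP; apply: hnm.
Qed.

Lemma fin_dom x : dom_subdiff h x -> h x \is a fin_num.
Proof. by move=> /(hsubX _); exact: finX. Qed.

Lemma prox_subdiff (x0 s0 x y z : V) : subdiff h x0 s0 ->
  is_prox X h nh x y z -> subdiff h z (nh x + y).
Proof.
move=> hs0 [Xz hz].
have hzf := finX _ Xz.
pose w := nh x + y.
pose r := fine (h z) - pair w z.
have key : forall p, dom_subdiff h p -> ((r + pair w p)%:E <= h p)%E.
  move=> p hp.
  have Xp := hsubX _ hp.
  have hpf := finX _ Xp.
  have := hz p Xp.
  rewrite /breg -(fineK hpf) lee_fin /r /w.
  rewrite !pairBr !pairDl.
  lra.
have G := @glob R d h hcvx hlsc hnm _ _ _ _ hs0 key.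
split => // x'.
apply: le_trans (G x').
by rewrite -(fineK hzf) -EFinD lee_fin /r pairBr; lra.
Qed.

End BregLemmas.

Section VI.
Context {R : realType} {d : nat}.
Local Notation V := 'rV[R]_d.
Variables (N : V -> R) (X : set V) (h : V -> \bar R) (nh : V -> V) (K : R).
Hypothesis HB : bregman_fun N X h nh K.

Lemma vi (x0 s0 z w x : V) : subdiff h x0 s0 -> subdiff h z w -> dom_subdiff h x ->
  0 <= pair (nh z - w) (x - z).
Proof.
move=> hs0 hzw hxd.
have hcvxB := @hcvx _ _ _ _ _ _ _ HB.
have hlscB := @hlsc _ _ _ _ _ _ _ HB.
have hnmB := @hnm _ _ _ _ _ _ _ HB.
have [hzf hzw'] := hzw.
have hzd : dom_subdiff h z by exists w.
have hxf := @fin_dom _ _ _ _ _ _ _ HB _ hxd.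
pose Hz := fine (h z).
pose Hx := fine (h x).
pose M := Hx - Hz - pair w (x - z).
have M0 : 0 <= M.
  have := hzw' x; rewrite -(fineK hzf) -(fineK hxf) -EFinD lee_fin.
  rewrite /M /Hx /Hz; lra.
pose L := pair (nh z - w) (x - z).
pose W := `|nh z - w|.
pose D := d%:R * `|x - z|.
have D0 : 0 <= D by rewrite /D mulr_ge0.
suff : - L <= 0 by rewrite /L; lra.
apply: (@small_s1 _ _ D) => // eps eps0 eps1.
have [del del0 hdel] := @cont_eps _ _ _ _ (@hcont _ _ _ _ _ _ _ HB) z hzd eps eps0.
pose C := d%:R * (eps + W) * Num.sqrt M.
pose Q := `|x - z| + Num.sqrt M.
have C0 : 0 <= C.
  rewrite /C; apply: mulr_ge0; last exact: sqrtr_ge0.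
  by apply: mulr_ge0 => //; apply: addr_ge0; [exact: ltW | exact: normr_ge0].
have Q0 : 0 <= Q by rewrite /Q; apply: addr_ge0 => //; exact: sqrtr_ge0.
suff : - L - eps * D <= 0 by rewrite subr_le0.
apply: (@small_s _ _ C Q del) => // t t0 t1 tQ.
pose a := z + t *: (x - z).
pose c := (t ^+ 3)^-1.
have c0 : 0 < c by rewrite /c invr_gt0 exprn_gt0.
have [q [hqf hqmin]] := @min_exists R d h hlscB hnmB w a c x0 s0 c0 hs0.
have hqsub := @min_subgrad R d h hcvxB hnmB w a c q (ltW c0) hqf hqmin.
have hqd : dom_subdiff h q by eexists; exact: hqsub.
have [_ hq'] := @hsel _ _ _ _ _ _ _ HB q hqd.
pose r := q - a.
have qE : q - z = t *: (x - z) + r by rewrite /r /a; apply/rowP => i; rewrite !mxE; ring.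
pose Hq := fine (h q).
have t01 : 0 <= t <= 1 by rewrite ltW.
have hc := hcvxB x z t t01.
have eA : t *: x + (1 - t) *: z = a by rewrite /a; apply/rowP => i; rewrite !mxE; ring.
rewrite eA -(fineK hxf) -(fineK hzf) -!EFinM -EFinD in hc.
have haf := @fin_of_le R d h hnmB _ _ hc.
pose Ha := fine (h a).
rewrite -(fineK haf) lee_fin -/Hx -/Hz in hc.
have hm := hqmin a.
rewrite -(fineK haf) -(fineK hqf) -!EFinD lee_fin /gq subrr pair0r mulr0 addr0 in hm.
have hzq := hzw' q.
rewrite -(fineK hzf) -(fineK hqf) -EFinD lee_fin in hzq.
have pa : pair w a = pair w z + t * pair w (x - z) by rewrite /a pairDr pairZr.
have bound1 : c * pair r r <= t * M.
  rewrite /M.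
  rewrite pairBr in hzq.
  rewrite -/r -/Ha -/Hq in hm hc.
  rewrite -/Hq -/Hz in hzq.
  lra.
have bound2 : pair r r <= (t ^+ 2) ^+ 2 * M.
  have : t ^+ 3 * (c * pair r r) <= t ^+ 3 * (t * M).
    by apply: ler_wpM2l => //; rewrite exprn_ge0 // ltW.
  rewrite [in X in X <= _]mulrA /c mulfV ?expf_neq0 ?gt_eqF // mul1r.
  by rewrite -exprM mulrA -exprSr.
have nr : `|r| <= t ^+ 2 * Num.sqrt M.
  apply: le_trans (norm_le_sqrt r) _.
  have -> : t ^+ 2 * Num.sqrt M = Num.sqrt ((t ^+ 2) ^+ 2 * M).
    by rewrite sqrtrM ?exprn_ge0 ?sqrtr_sqr ?ger0_norm ?exprn_ge0 // ltW.
  exact: ler_wsqrtr.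
have t2 : t ^+ 2 <= t by rewrite expr2 -[leRHS]mul1r ler_wpM2r // ltW.
have sM0 : 0 <= Num.sqrt M by exact: sqrtr_ge0.
have nzq : `|z - q| < del.
  apply: (le_lt_trans _ tQ).
  rewrite distrC qE.
  apply: le_trans (ler_normD _ _) _.
  rewrite normrZ (ger0_norm (ltW t0)) /Q.
  have := le_trans nr (ler_wpM2r sM0 t2); lra.
have hne := hdel q hqd nzq.
have mono : 0 <= pair (nh q - w) (q - z).
  have := hq' z.
  rewrite -(fineK hzf) -(fineK hqf) -EFinD lee_fin => h1.
  rewrite pairBl pairBr [pair w (q - z)]pairBr.
  rewrite pairBr in h1. rewrite pairBr in hzq. lra.
rewrite qE pairDr pairZr in mono.
have eL : pair (nh q - w) (x - z) = L + pair (nh q - nh z) (x - z).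
  by rewrite /L !pairBl; ring.
rewrite eL in mono.
have b1 : pair (nh q - nh z) (x - z) <= eps * D.
  apply: le_trans (pair_le _ _) _.
  rewrite /D mulrCA; apply: ler_wpM2r => //.
  by rewrite distrC ltW.
have b2 : pair (nh q - w) r <= t ^+ 2 * C.
  apply: le_trans (pair_le _ _) _.
  have nw : `|nh q - w| <= eps + W.
    have -> : nh q - w = (nh q - nh z) + (nh z - w) by rewrite addrA subrK.
    apply: le_trans (ler_normD _ _) _.
    by rewrite lerD2r distrC ltW.
  rewrite /C.
  have : `|nh q - w| * `|r| <= (eps + W) * (t ^+ 2 * Num.sqrt M).
    apply: ler_pM => //.
  move=> hh.
  have : d%:R * (`|nh q - w| * `|r|) <= d%:R * ((eps + W) * (t ^+ 2 * Num.sqrt M)).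
    exact: ler_wpM2l.
  move=> hh2; apply: le_trans hh2 _.
  by rewrite le_eqVlt; apply/orP; left; apply/eqP; ring.
have key : t * (- L - eps * D) <= t * (t * C).
  have : t * (eps * D) >= t * pair (nh q - nh z) (x - z) by apply: ler_wpM2l => //; exact: ltW.
  have : t ^+ 2 * C = t * (t * C) by rewrite expr2 mulrA.
  nra.
by rewrite ler_pM2l in key.
Qed.

End VI.

Theorem lemmaB2 (R : realType) (d : nat) (N : 'rV[R]_d -> R) (X : set 'rV[R]_d)
  (f h : 'rV[R]_d -> \bar R) (nf nh : 'rV[R]_d -> 'rV[R]_d) (K G sigma : R)
  (dO : measure_display) (Omega : measurableType dO) (P : probability Omega R)
  (x U : nat -> Omega -> 'rV[R]_d) (delta : nat -> Omega -> R)
  (x0 x1 : 'rV[R]_d) :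
  is_norm N ->
  cvx_set X ->
  proper_fun f -> lower_semicontinuous f -> cvx_efun f -> edom f = X ->
  (exists xs, forall z, (f xs <= f z)%E) ->
  (forall z, dom_subdiff f z -> subdiff f z (nf z)) ->
  bregman_fun N X h nh K ->
  rel_continuous f nf h nh G ->
  0 <= sigma ->
  dom_subdiff h x0 -> dom_subdiff h x1 -> x0 != x1 ->
  (forall w, x 0%N w = x0) -> (forall w, x 1%N w = x1) ->
  (forall w, delta 0%N w = Num.sqrt (breg h nh x0 x1 + breg h nh x1 x0)) ->
  (forall t (i : 'I_d), measurable_fun setT (fun w => x t w ord0 i)) ->
  (forall t (i : 'I_d), (1 <= t)%N -> measurable_fun setT (fun w => U t w ord0 i)) ->
  (forall t (i : 'I_d) (A : set Omega), (1 <= t)%N -> nat_filtration x t A ->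
     (\int[P]_(w in A) (U t w ord0 i)%:E = 0)%E) ->
  (forall t, (1 <= t)%N ->
     {ae P, forall w, dual_norm N (U t w) ^+ 2 <= sigma ^+ 2}) ->
  (forall t w, (1 <= t)%N ->
     is_prox X h nh (x t w) (- (gamma delta t w *: (nf (x t w) + U t w))) (x t.+1 w)) ->
  (forall t w, (1 <= t)%N ->
     delta t w = Num.sqrt (breg h nh (x t w) (x t.+1 w) + breg h nh (x t.+1 w) (x t w))
                 / gamma delta t w) ->
  {ae P, forall w, forall t, (1 <= t)%N ->
     delta t w ^+ 2 <= (Num.sqrt 2 * G + Num.sqrt (2 / K) * sigma) ^+ 2}.
Proof.
move=> HN _ _ _ _ _ _ _ HB [G0 hrel] sig0 [s0 hs0] x1d _ _ hx1 _ _ _ _ hU hprox hdelta.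
have hae : {ae P, forall w, forall t, (1 <= t)%N ->
    dual_norm N (U t w) ^+ 2 <= sigma ^+ 2}.
  apply: ae_foralln => n.
  case: n => [|n]; first by apply: nearW => w.
  by apply: filterS (hU n.+1 isT) => w hw _.
apply: filterS hae => w hw t t1.
have K0' := @K0 _ _ _ _ _ _ _ HB.
have hxtd : dom_subdiff h (x t w).
  case: t t1 => [//|[|t]] _; first by rewrite hx1.
  eexists; exact: (@prox_subdiff _ _ _ _ _ _ _ HB _ _ _ _ _ hs0 (hprox t.+1 w isT)).
set xt := x t w in hxtd *.
set z := x t.+1 w.
set g := gamma delta t w.
have g0 : 0 <= g by rewrite /g /gamma invr_ge0 sqrtr_ge0.
set y := - (g *: (nf xt + U t w)).
have hz := @prox_subdiff _ _ _ _ _ _ _ HB _ _ _ _ _ hs0 (hprox t w t1).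
rewrite -/xt -/z -/g -/y in hz.
have hzd : dom_subdiff h z by exists (nh xt + y).
have hvi := @vi _ _ _ _ _ _ _ HB _ _ _ _ _ hs0 hz hxtd.
have hxf := @fin_dom _ _ _ _ _ _ _ HB _ hxtd.
have hzf := @fin_dom _ _ _ _ _ _ _ HB _ hzd.
have hsc1 := @hsc _ _ _ _ _ _ _ HB _ _ hxtd hzd.
have hsc2 := @hsc _ _ _ _ _ _ _ HB _ _ hzd hxtd.
rewrite -(fineK hxf) -(fineK hzf) -!EFinD lee_fin in hsc1.
rewrite -(fineK hxf) -(fineK hzf) -!EFinD lee_fin in hsc2.
have hze : edom h z.
  by apply: (@hXe _ _ _ _ _ _ _ HB); apply: (@hsubX _ _ _ _ _ _ _ HB).
have [_ hrel2] := hrel _ _ hxtd hze.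
have hdual := @dual_bound _ _ N HN (U t w) (xt - z).
have hwt := hw t t1.
pose D1 := breg h nh z xt.
pose D2 := breg h nh xt z.
pose B := D2 + D1.
pose n := N (xt - z).
have n0 : 0 <= n by apply: (@Nge0 _ _ N HN).
have nE : N (z - xt) = n by rewrite /n -opprB (@NN _ _ N HN).
have hD1 : K / 2 * n ^+ 2 <= D1.
  rewrite /D1 /breg -nE; lra.
have hD2 : K / 2 * n ^+ 2 <= D2.
  rewrite /D2 /breg /n; lra.
have hn2 : 0 <= K / 2 * n ^+ 2 by rewrite mulr_ge0 ?divr_ge0 ?sqr_ge0 // ltW.
have B0 : 0 <= B by rewrite /B; lra.
have hB : B <= g * (pair (nf xt) (xt - z) + pair (U t w) (xt - z)).
  have e1 : pair (nh xt) (z - xt) = - pair (nh xt) (xt - z) by rewrite -pairNr opprB.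
  have e2 : pair y (xt - z) = - (g * (pair (nf xt) (xt - z) + pair (U t w) (xt - z))).
    by rewrite /y pairNl pairZl pairDl.
  have e3 : pair (nh z - (nh xt + y)) (xt - z) =
      pair (nh z) (xt - z) - pair (nh xt) (xt - z) - pair y (xt - z).
    by rewrite pairBl pairDl; ring.
  rewrite e3 e2 in hvi.
  rewrite /B /D1 /D2 /breg e1; lra.
have dn : dual_norm N (U t w) <= sigma.
  have := ler_wsqrtr hwt; rewrite !sqrtr_sqr (ger0_norm sig0) => hh.
  exact: le_trans (ler_norm _) hh.
have hUb : pair (U t w) (xt - z) <= sigma * n := le_trans hdual (ler_wpM2r n0 dn).
have hKn : K * n ^+ 2 <= B by rewrite /B; lra.
pose b := Num.sqrt B.
have b0 : 0 <= b by exact: sqrtr_ge0.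
have bB : b ^+ 2 = B by rewrite /b sqr_sqrtr.
have hs1 : Num.sqrt (2 * D1) <= Num.sqrt 2 * b.
  rewrite /b -sqrtrM //; apply: ler_wsqrtr; rewrite /B; lra.
have hs2 : n <= Num.sqrt (2 / K) * b.
  have h1 : n ^+ 2 <= B / K by rewrite ler_pdivlMr // mulrC.
  have h2 : 0 <= B / K by rewrite divr_ge0 // ltW.
  have h3 : n ^+ 2 <= 2 / K * B.
    have -> : 2 / K * B = 2 * (B / K) by ring.
    lra.
  have hK2 : 0 <= 2 / K by rewrite divr_ge0 // ltW.
  rewrite /b -(sqrtrM _ hK2).
  have -> : n = Num.sqrt (n ^+ 2) by rewrite sqrtr_sqr ger0_norm.
  exact: ler_wsqrtr.
pose C := Num.sqrt 2 * G + Num.sqrt (2 / K) * sigma.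
have C0 : 0 <= C.
  by rewrite /C addr_ge0 // mulr_ge0 ?sqrtr_ge0 // ltW.
have hfU : pair (nf xt) (xt - z) + pair (U t w) (xt - z) <= C * b.
  have h1 : G * Num.sqrt (2 * D1) <= G * (Num.sqrt 2 * b) by apply: ler_wpM2l => //; exact: ltW.
  have h2 : sigma * n <= sigma * (Num.sqrt (2 / K) * b) by apply: ler_wpM2l.
  rewrite /C mulrDl.
  have e1 : G * (Num.sqrt 2 * b) = Num.sqrt 2 * G * b by ring.
  have e2 : sigma * (Num.sqrt (2 / K) * b) = Num.sqrt (2 / K) * sigma * b by ring.
  rewrite -e1 -e2.
  have := hrel2; rewrite -/D1 => h3.
  lra.
have hBb : b ^+ 2 <= g * C * b.
  rewrite bB -mulrA; apply: le_trans hB _; exact: ler_wpM2l.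
have bgC : b <= g * C.
  have [->|bn0] := eqVneq b 0; first by rewrite mulr_ge0.
  have bp : 0 < b by rewrite lt0r bn0 b0.
  by move: hBb; rewrite expr2 ler_pM2r.
rewrite (hdelta t w t1) -/xt -/z -/g.
have -> : breg h nh xt z + breg h nh z xt = B by [].
rewrite -/b.
have [->|gn0] := eqVneq g 0.
  by rewrite invr0 mulr0 expr0n /= sqr_ge0.
have gp : 0 < g by rewrite lt0r gn0 g0.
have hd : b / g <= C by rewrite ler_pdivrMr // mulrC.
have hd0 : 0 <= b / g by rewrite divr_ge0.
by rewrite !expr2; apply: ler_pM.
Qed.
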